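(* Let $\Pi$ be the node-edge-checkable problem encoding maximal matching defined below, and $\Pi^*$ its node-list variant. Then for every valid input instance $(S,h_{\mathrm{in}})$ of $\Pi^*$ (on any finite semi-graph $S$), $\Pi^*$ admits a valid solution.
   Context: Semi-graph: a bipartite graph $S=(A\sqcup B,C)$ with every $b\in B$ of degree at most $2$; $A$ = nodes, $B$ = edges, $C$ = half-edges (incident node–edge pairs); degree of a node / rank of an edge = its degree in $S$. Node-edge-checkable problem $\Pi=(\Sigma,\mathcal N_\Pi,\mathcal E_\Pi)$: $\mathcal N_\Pi^i$ ($i\ge 0$) and $\mathcal E_\Pi^i$ ($i\in\{0,1,2\}$) are collections of cardinality-$i$ multisets over $\Sigma$. The problem $\Pi$: $\Sigma=\{M,P,O,D\}$. For each $i\ge 0$, $\mathcal N_\Pi^i$ consists of all cardinality-$i$ multisets $\{\chi_1,\dots,\chi_i\}$ over $\Sigma$ such that either (i) exactly one $\chi_j$ equals $M$ and all others lie in $\{P,O,D\}$, or (ii) all $\chi_k$ lie in $\{O,D\}$. $\mathcal E_\Pi^0=\{\emptyset\}$, $\mathcal E_\Pi^1=\{\{D\}\}$, $\mathcal E_\Pi^2=\{\{P,O\},\{M,M\},\{P,P\}\}$. Node-list variant $\Pi^*$: for $i,j\ge0$ and $\psi\in\mathcal N_\Pi^j$, $\mathcal N^i_{\Pi,\psi}$ is the set of cardinality-$i$ multisets $\chi$ over $\Sigma$ with $\chi\uplus\psi\in\mathcal N_\Pi^{i+j}$, and $\mathcal L^i=\{\mathcal N^i_{\Pi,\psi}:\psi\in\mathcal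 N_\Pi^j\text{ for some }j\ge0\}$. A valid input instance is $(S,h_{\mathrm{in}})$ with $h_{\mathrm{in}}(v)\in\mathcal L^{\deg(v)}$ for each node $v$. A valid solution is $h_{\mathrm{out}}:H(S)\to\Sigma$ such that for each node $v$ the multiset of labels on its incident half-edges lies in $h_{\mathrm{in}}(v)$, and for each edge $e$ the multiset of labels on its incident half-edges lies in $\mathcal E_\Pi^{\mathrm{rank}(e)}$. *)

(* Defs.v *)
From HB Require Import structures.
From mathcomp Require Import all_boot.
Set Implicit Arguments. Unset Strict Implicit. Unset Printing Implicit Defensive.

Inductive Sigma := M | P | O | D.

Definition Sigma_eqb (x y : Sigma) : bool :=
  match x, y with
  | M, M | P, P | O, O | D, D => true
  | _, _ => false
  end.

Lemma Sigma_eqP : Equality.axiom Sigma_eqb.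
Proof. by case; case; constructor. Qed.

HB.instance Definition _ := hasDecEq.Build Sigma Sigma_eqP.

(* Multisets over Sigma are represented by sequences; every predicate below
   depends only on the multiset (it is invariant under permutation); the
   cardinality of the multiset is [size s]. *)

(* Node constraint N_Pi (all cardinalities i at once): either exactly one
   label is M (and so all others are in {P,O,D}), or all labels are in {O,D}. *)
Definition N_Pi (s : seq Sigma) : bool :=
  (count (pred1 M) s == 1) || all (fun x => x \in [:: O; D]) s.

Definition E_Pi (s : seq Sigma) : bool :=
  match s with
  | [::] => true
  | [:: x] => x == D
  | [:: x; y] => perm_eq [:: x; y] [:: P; O] || perm_eq [:: x; y] [:: M; M]
                 || perm_eq [:: x; y] [:: P; P]
  | _ => false
  end.

(* A finite semi-graph: nodes A, edges B, half-edges C ⊆ A × B,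
   every edge has degree at most 2. *)
Definition semigraph (A B : finType) (C : {set A * B}) : Prop :=
  forall e : B, #|[set a : A | (a, e) \in C]| <= 2.

Definition node_deg (A B : finType) (C : {set A * B}) (v : A) : nat :=
  #|[set b : B | (v, b) \in C]|.

Definition N_list (i : nat) (psi : seq Sigma) (chi : seq Sigma) : Prop :=
  size chi = i /\ N_Pi (chi ++ psi).

Definition in_L (i : nat) (L : seq Sigma -> Prop) : Prop :=
  exists psi : seq Sigma, N_Pi psi /\ forall chi, L chi <-> N_list i psi chi.

Definition valid_input (A B : finType) (C : {set A * B})
    (h_in : A -> seq Sigma -> Prop) : Prop :=
  forall v : A, in_L (node_deg C v) (h_in v).

Definition node_labels (A B : finType) (C : {set A * B})
    (h_out : A * B -> Sigma) (v : A) : seq Sigma :=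
  [seq h_out (v, b) | b <- enum B & (v, b) \in C].

Definition edge_labels (A B : finType) (C : {set A * B})
    (h_out : A * B -> Sigma) (e : B) : seq Sigma :=
  [seq h_out (a, e) | a <- enum A & (a, e) \in C].

(* Valid solution: h_out labels half-edges (its values off C are irrelevant). *)
Definition valid_solution (A B : finType) (C : {set A * B})
    (h_in : A -> seq Sigma -> Prop) (h_out : A * B -> Sigma) : Prop :=
  (forall v : A, h_in v (node_labels C h_out v)) /\
  (forall e : B, E_Pi (edge_labels C h_out e)).

(* Main.v *)
Require Import Defs.
From HB Require Import structures.
From mathcomp Require Import all_boot.
From Stdlib Require Import ClassicalEpsilon.

Lemma cnt_set (T:finType)(Q:pred T): #|[set x | Q x]| = count Q (enum T).
Proof.
rewrite cardsE cardE /enum_mem -size_filter -filter_predI. congr size.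
by apply: eq_filter=> x /=; rewrite andbT.
Qed.

Lemma cntM0 s : all (fun x => x \in [:: O; D]) s -> count (pred1 M) s = 0.
Proof. by elim: s => //= [[]] s IH /andP[]. Qed.

Theorem mainTheorem10 (A B : finType) (C : {set A * B})
    (h_in : A -> seq Sigma -> Prop) :
  semigraph C -> valid_input C h_in ->
  exists h_out : A * B -> Sigma, valid_solution C h_in h_out.
Proof.
move=> Hsg Hin.
have Hpsi : forall v, {psi : seq Sigma | N_Pi psi /\
    forall chi, h_in v chi <-> N_list (node_deg C v) psi chi}.
  by move=> v; apply: constructive_indefinite_description; exact: Hin.
pose psi v := sval (Hpsi v).
pose free v := all (fun x => x \in [:: O; D]) (psi v).
pose ends e := [set a | (a,e) \in C].
pose good e := (#|ends e| == 2) && [forall a, ((a,e) \in C) ==> free a].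
pose inc (S : {set B}) v := [set e in S | (v,e) \in C].
pose ism (S : {set B}) := [forall e, (e \in S) ==> good e] && [forall v, #|inc S v| <= 1].
have ism0 : ism set0.
  apply/andP; split; apply/forallP => x; first by rewrite in_set0.
  rewrite leq_eqVlt; apply/orP; right; rewrite ltnS leqn0 cards_eq0; apply/eqP/setP => y.
  by rewrite !inE.
pose Ms := [arg max_(S > set0 | ism S) #|S|].
have [HMs Hmax] : ism Ms /\ forall S, ism S -> #|S| <= #|Ms|.
  by rewrite /Ms; case: arg_maxnP => // S H1 H2; split => // S' /H2.
have [HMs1 HMs2] := andP HMs.
have Hgood : forall e, e \in Ms -> good e by move=> e; apply: (implyP (forallP HMs1 e)).
pose cov v := ~~ free v || (#|inc Ms v| != 0).
pose h (p : A * B) := if p.2 \in Ms then M else if #|ends p.2| == 1 then D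
                      else if cov p.1 then P else O.
exists h; split.
- move=> v; have [Npsi Hiff] := svalP (Hpsi v); apply/Hiff; split.
    by rewrite /node_labels size_map size_filter /node_deg cnt_set.
  have HcM : count (pred1 M) (node_labels C h v) = #|inc Ms v|.
    rewrite /node_labels count_map count_filter /inc cnt_set.
    apply: eq_count => b /=; rewrite /h /=.
    case: (b \in Ms); rewrite ?andbT ?andbF //.
    by case: (_ == 1) => //; case: (cov v).
  rewrite /N_Pi count_cat HcM.
  case Hf: (free v).
  + have Hp0 : count (pred1 M) (psi v) = 0 by apply: cntM0.
    rewrite Hp0 addn0.
    case Hc: (#|inc Ms v| == 0).
    * apply/orP; right; rewrite all_cat; apply/andP; split; last exact: Hf.
      rewrite /node_labels all_map; apply/allP => b; rewrite mem_filter => /andP[vb _].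
      have bM : b \notin Ms.
        apply/negP => bM; move/eqP: Hc; move/eqP; rewrite cards_eq0 => /eqP/setP/(_ b).
        by rewrite !inE bM vb.
      rewrite /= /h /= (negbTE bM) /cov Hf Hc /=.
      by case: (_ == 1).
    * apply/orP; left; have := forallP HMs2 v.
      by case: #|inc Ms v| Hc => [|[|]].
  + have Hn : N_Pi (psi v) by [].
    move: Hn; rewrite /N_Pi.
    have -> : all (fun x => x \in [:: O; D]) (psi v) = false by exact: Hf.
    rewrite orbF => /eqP ->.
    have -> : #|inc Ms v| = 0.
      apply/eqP; rewrite cards_eq0; apply/eqP/setP => e; rewrite !inE.
      apply/negbTE/andP => [[eM ve]].
      have /andP[_ /forallP/(_ v)] := Hgood e eM.
      by rewrite ve Hf.
    by [].
- move=> e; rewrite /edge_labels.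
  set s := [seq a <- enum A | (a,e) \in C].
  have Hs : size s = #|ends e| by rewrite size_filter /ends cnt_set.
  have Hus : uniq s by rewrite filter_uniq // enum_uniq.
  have Hms : forall a, (a \in s) = ((a,e) \in C) by move=> a; rewrite mem_filter mem_enum andbT.
  have Hle := Hsg e.
  have Hgm : e \in Ms -> #|ends e| = 2.
    by move=> /Hgood /andP[/eqP].
  case Es: s Hs Hus Hms => [|a [|b [|c s']]] Hs Hus Hms //=; last first.
  + by rewrite -Hs in Hle.
  + rewrite /h /= -Hs.
    case eM: (e \in Ms); first by [].
    have c2 : #|ends e| = 2 by rewrite -Hs.
    have Hab : a != b by move: Hus => /=; rewrite inE andbT.
    case ca: (cov a); case cb: (cov b) => //.
    exfalso.
    have fa : free a by move: ca; rewrite /cov; case: (free a).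
    have fb : free b by move: cb; rewrite /cov; case: (free b).
    have ia : #|inc Ms a| = 0 by move: ca; rewrite /cov fa /=; case: #|inc Ms a|.
    have ib : #|inc Ms b| = 0 by move: cb; rewrite /cov fb /=; case: #|inc Ms b|.
    have : ism (e |: Ms).
      apply/andP; split; apply/forallP => x.
        rewrite in_setU1; apply/implyP => /orP[/eqP -> | xM]; last exact: Hgood.
        apply/andP; split; first by rewrite c2.
        apply/forallP => y; apply/implyP => ye.
        have : y \in [:: a; b] by rewrite Hms.
        by rewrite !inE => /orP[/eqP -> | /eqP ->].
      case xe: ((x,e) \in C).
        have Hx : inc (e |: Ms) x = [set e].
          apply/setP => y; rewrite !inE.
          case ye: (y == e); first by rewrite (eqP ye) xe.
          apply/negbTE/andP => [[yM xy]]; rewrite /= in yM.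
          have : x \in [:: a; b] by rewrite Hms.
          rewrite !inE => /orP[/eqP xa | /eqP xb].
            by move/eqP: ia; rewrite cards_eq0 => /eqP/setP/(_ y); rewrite !inE yM -xa xy.
          by move/eqP: ib; rewrite cards_eq0 => /eqP/setP/(_ y); rewrite !inE yM -xb xy.
        by rewrite Hx cards1.
      have -> : inc (e |: Ms) x = inc Ms x.
        apply/setP => y; rewrite !inE.
        by case ye: (y == e) => //=; rewrite (eqP ye) xe andbF.
      exact: (forallP HMs2 x).
    move/Hmax; rewrite cardsU1 eM /=.
    by rewrite ltnn.
  + have Hn : e \notin Ms by apply/negP => /Hgm; rewrite -Hs.
    by rewrite /h /= (negbTE Hn) -Hs.
Qed.
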